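(* Let $q$ be an odd prime power and let $\mathcal{O}$ be an oval in $PG(2,q)$; let $n=q+1$. Then $\mathcal{O}$ is a $(1,\mu)$-saturating $n$-set with $\mu=\frac{1}{2}(q-1)$. A linear code $C$ over $\mathbb{F}_q$ corresponding to $\mathcal{O}$ is an $[n,n-3,4]_q$ code with covering radius $2$, and it is a $(2,\mu)$-MCF code with $\mu$-density $\gamma_\mu(C,2)=1+\frac{1}{q}$.
   Context: $PG(2,q)$ is the projective plane over $\mathbb{F}_q$. An oval is a set of $q+1$ points of $PG(2,q)$ no three of which are collinear. For a point set $S$, a secant of $S$ is a line $\ell$ with $|\ell\cap S|\ge2$, counted with multiplicity $\binom{|\ell\cap S|}{2}$. A set $S$ of $n$ points of $PG(N,q)$ is a $(1,\mu)$-saturating $n$-set if (M1) $S$ spans $PG(N,q)$, (M2) $S\neq PG(N,q)$, and (M3) every point $Q\notin S$ lies on secants of $S$ whose multiplicities sum to at least $\mu$. A linear code of length $n$ over $\mathbb{F}_q$ corresponds to $S=\{P_1,\dots,P_n\}\subset PG(N,q)$ if it has a parity-check matrix whose $i$-th column is a homogeneous coordinate vector of $P_i$. An $[n,k,d]_q$ code is a linear code of length $n$, dimension $k$ and minimum distance $d$; its covering radius $R$ is $\max_{x\in\mathbb{F}_q^n} d(x,C)$ (Hamming distance). A code $C$ with covering radius $R$ is an $(R,\mu)$-MCF code if every $x\in\mathbb{F}_q^n$ with $d(x,C)=R$ is at distance exactly $R$ from at least $\mu$ codewords. Its $\mu$-density is $\gamma_\mu(C,R)=\frac{\sum_{x:\,d(x,C)=R}\#\{c\in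 C: d(x,c)=R\}}{\mu\cdot\#\{x\in\mathbb{F}_q^n: d(x,C)=R\}}$. *)

(* Defs.v *)
From HB Require Import structures.
From mathcomp Require Import all_boot all_order all_algebra.
Set Implicit Arguments. Unset Strict Implicit. Unset Printing Implicit Defensive.
Import Order.TTheory GRing.Theory Num.Theory.
Local Open Scope ring_scope.

Section Proj.
Variable F : finFieldType.

Definition normalized (N : nat) (v : 'rV[F]_N.+1) : bool :=
  [exists i : 'I_N.+1,
     (v 0 i == 1) && [forall j : 'I_N.+1, (j < i)%N ==> (v 0 j == 0)]].

(* Points of PG(N,q): one normalized representative per 1-dim subspace. *)
Definition point (N : nat) := {v : 'rV[F]_N.+1 | normalized v}.

Definition line_through (N : nat) (P1 P2 : point N) : {set point N} :=
  [set R : point N | (val R <= col_mx (val P1) (val P2))%MS].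

Definition lines (N : nat) : {set {set point N}} :=
  [set l : {set point N} | [exists P1 : point N, exists P2 : point N,
     (P1 != P2) && (l == line_through P1 P2)]].

Definition collinear (N : nat) (P1 P2 P3 : point N) : Prop :=
  exists2 l, l \in lines N & [/\ P1 \in l, P2 \in l & P3 \in l].

Definition is_oval (O : {set point 2}) : Prop :=
  #|O| = #|F|.+1 /\
  forall P1 P2 P3, P1 \in O -> P2 \in O -> P3 \in O ->
    P1 != P2 -> P1 != P3 -> P2 != P3 -> ~ collinear P1 P2 P3.

Definition secant_mult (N : nat) (S : {set point N}) (Q : point N) : nat :=
  \sum_(l in lines N | Q \in l) 'C(#|l :&: S|, 2).

Definition saturating_1mu (N : nat) (S : {set point N}) (n mu : nat) : Prop :=
  [/\ #|S| = n,
      \rank (\sum_(P in S) <<val P>>)%MS = N.+1,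
      S != setT &
      forall Q : point N, Q \notin S -> (mu <= secant_mult S Q)%N].

Variable n : nat.

Definition wt (x : 'rV[F]_n) : nat := #|[set i : 'I_n | x 0 i != 0]|.
Definition hdist (x y : 'rV[F]_n) : nat := wt (x - y).
Definition codewords (C : 'M[F]_n) : {set 'rV[F]_n} :=
  [set c : 'rV[F]_n | (c <= C)%MS].

Definition code_dim (C : 'M[F]_n) : nat := \rank C.
Definition min_dist (C : 'M[F]_n) : nat :=
  \big[minn/n]_(c in codewords C | c != 0) wt c.
Definition distC (C : 'M[F]_n) (x : 'rV[F]_n) : nat :=
  \big[minn/n]_(c in codewords C) hdist x c.
Definition covrad (C : 'M[F]_n) : nat := \max_(x : 'rV[F]_n) distC C x.

Definition nb_at (C : 'M[F]_n) (R : nat) (x : 'rV[F]_n) : nat :=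
  #|[set c in codewords C | hdist x c == R]|.

Definition MCF (C : 'M[F]_n) (R mu : nat) : Prop :=
  covrad C = R /\
  forall x : 'rV[F]_n, distC C x = R -> (mu <= nb_at C R x)%N.

Definition density (C : 'M[F]_n) (R mu : nat) : rat :=
  ((\sum_(x : 'rV[F]_n | distC C x == R) nb_at C R x)%:R /
   (mu%:R * #|[set x : 'rV[F]_n | distC C x == R]|%:R))%R.

End Proj.

(* C corresponds to S = {P_1,...,P_n}: C has a parity-check matrix H whose
   i-th column is a homogeneous coordinate vector of P_i, where i |-> P_i
   enumerates S bijectively. *)
Definition corresponds (F : finFieldType) (N n : nat) (C : 'M[F]_n)
    (S : {set point F N}) : Prop :=
  exists (H : 'M[F]_(N.+1, n)) (P : 'I_n -> point F N),
    [/\ injective P, S = [set P i | i : 'I_n],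
        (forall i : 'I_n, exists2 c : F, c != 0 & col i H = c *: (val (P i))^T)
      & (C == kermx H^T)%MS].

(* Main.v *)
Require Import Defs.
From HB Require Import structures.
From mathcomp Require Import all_boot all_order all_algebra.
From mathcomp Require Import zify ring lra.
Set Implicit Arguments. Unset Strict Implicit. Unset Printing Implicit Defensive.
Import Order.TTheory GRing.Theory Num.Theory.

Section Pts.
Variable F : finFieldType.
Local Open Scope ring_scope.

Definition vp N (P : point F N) : 'rV[F]_N.+1 := val P.

Lemma vp_neq0 N (P : point F N) : vp P != 0.
Proof.
case: P => v nv; rewrite /vp /=; move: nv => /existsP [i /andP [/eqP vi _]].
apply/eqP => v0; move: vi; rewrite v0 mxE => /esym/eqP; by rewrite oner_eq0.
Qed.

Lemma scale_norm N (P R : point F N) (a : F) : vp P = a *: vp R -> P = R.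
Proof.
case: P R => [v nv] [w nw] /= E; apply: val_inj => /=.
rewrite /vp /= in E.
move: (nv) (nw) => /existsP [i /andP [/eqP vi /forallP vlt]] /existsP [k /andP [/eqP wk /forallP wlt]].
have vE j : v 0 j = a * w 0 j by rewrite E mxE.
case: (ltngtP i k) => [ik|ki|/val_inj ik].
- have := wlt i; rewrite ik /= => /eqP wi0.
  by move: vi; rewrite vE wi0 mulr0 => /esym/eqP; rewrite oner_eq0.
- have := vlt k; rewrite ki /= => /eqP; rewrite vE wk mulr1 => a0.
  by move: vi; rewrite vE a0 mul0r => /esym/eqP; rewrite oner_eq0.
- subst k; have a1 : a = 1 by move: vi; rewrite vE wk mulr1.
  by rewrite E a1 scale1r.
Qed.

Lemma vp_sub_eq N (P R : point F N) : (vp P <= vp R)%MS -> P = R.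
Proof.
case/submxP => D E; apply: (@scale_norm _ _ _ (D 0 0)).
by rewrite E {1}(mx11_scalar D) mul_scalar_mx.
Qed.

Lemma exists_pt N (v : 'rV[F]_N.+1) : v != 0 ->
  exists P : point F N, exists2 a : F, a != 0 & v = a *: vp P.
Proof.
move=> nz.
have : ~~ [forall i, v 0 i == 0].
  apply: contra nz => /forallP H; apply/eqP/rowP => i; rewrite mxE; exact/eqP/H.
move/forallPn => [i vi].
have ex : exists k, (k < N.+1)%N && (v 0 (inord k) != 0).
  by exists i; rewrite ltn_ord inord_val.
case: (ex_minnP ex) => m /andP [mlt vm] mmin.
pose i0 : 'I_N.+1 := inord m.
have i0E : (i0 : nat) = m by rewrite /i0 inordK.
have nw : normalized ((v 0 i0)^-1 *: v).
  apply/existsP; exists i0; rewrite mxE mulVf // eqxx /=.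
  apply/forallP => j; apply/implyP => ji; rewrite mxE.
  case: (eqVneq (v 0 j) 0) => [->|vj]; first by rewrite mulr0.
  have := mmin j; rewrite ltn_ord inord_val vj /= => /(_ isT).
  by rewrite -i0E leqNgt ji.
exists (exist (fun x => normalized x) _ nw); exists (v 0 i0) => //.
by rewrite /vp /= scalerA mulfV // scale1r.
Qed.

Definition span2 N (P R : point F N) := col_mx (vp P) (vp R).

Lemma sub_span2l N (P R : point F N) : (vp P <= span2 P R)%MS.
Proof. by have := submx_refl (span2 P R); rewrite col_mx_sub => /andP[]. Qed.
Lemma sub_span2r N (P R : point F N) : (vp R <= span2 P R)%MS.
Proof. by have := submx_refl (span2 P R); rewrite col_mx_sub => /andP[]. Qed.

Lemma span2C N (P R : point F N) : (span2 P R :=: span2 R P)%MS.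
Proof.
apply/eqmxP; apply/andP; split; rewrite col_mx_sub ?sub_span2l ?sub_span2r //.
Qed.

Lemma rank_span2 N (P R : point F N) : P != R -> \rank (span2 P R) = 2%N.
Proof.
move=> PR; have := mxrank_sum_cap (vp P) (vp R).
rewrite !rank_rV !vp_neq0 /= addsmxE.
have -> : \rank (vp P :&: vp R)%MS = 0%N.
  have le1 : (\rank (vp P :&: vp R)%MS <= 1)%N.
    by apply: leq_trans (mxrankS (capmxSl _ _)) _; rewrite rank_rV vp_neq0.
  case: (mxrank_leqif_sup (capmxSl (vp P) (vp R))) => _.
  rewrite rank_rV vp_neq0 /=.
  case: (ltngtP (\rank (vp P :&: vp R)%MS) 1) le1 => //; first by case: (\rank _).
  move=> -> _ /esym /(submx_trans) /(_ (capmxSr (vp P) (vp R))) /vp_sub_eq E.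
  by rewrite E eqxx in PR.
by rewrite addn0.
Qed.

Lemma span2_eq N (P R A B : point F N) : P != R -> A != B ->
  (vp A <= span2 P R)%MS -> (vp B <= span2 P R)%MS -> (span2 A B :=: span2 P R)%MS.
Proof.
move=> PR AB sA sB; apply/eqmxP.
have sub : (span2 A B <= span2 P R)%MS by rewrite col_mx_sub sA sB.
case: (mxrank_leqif_eq sub) => _; rewrite !rank_span2 // eqxx.
Qed.

Lemma in_line N (P R X : point F N) : (X \in line_through P R) = (vp X <= span2 P R)%MS.
Proof. by rewrite inE. Qed.

Lemma line_in_lines N (P R : point F N) : P != R -> line_through P R \in lines F N.
Proof.
move=> PR; rewrite inE; apply/existsP; exists P; apply/existsP; exists R.
by rewrite PR eqxx.
Qed.

Lemma line_uniq N (l : {set point F N}) A B : l \in lines F N -> A \in l -> B \in l ->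
  A != B -> l = line_through A B.
Proof.
rewrite inE => /existsP [P /existsP [R /andP [PR /eqP ->]]] Al Bl AB.
rewrite !in_line in Al Bl.
by apply/setP => X; rewrite !in_line (span2_eq PR AB Al Bl).
Qed.

Lemma card_sub m n (A : 'M[F]_(m, n)) :
  #|[set v : 'rV[F]_n | (v <= A)%MS]| = (#|F| ^ \rank A)%N.
Proof.
rewrite -[\rank A]mul1n -card_mx.
have injA: injective (mulmxr (row_base A)).
  have /row_freeP[A' A'K] := row_base_free A.
  by move=> ?; apply: can_inj (mulmxr A') _ => u; rewrite /= -mulmxA A'K mulmx1.
rewrite -(card_image (injA _)); apply: eq_card => v.
by rewrite inE -(eq_row_base A) (sameP submxP codomP).
Qed.

End Pts.

Section Cnt.
Variable F : finFieldType.
Local Open Scope ring_scope.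

Lemma card_sumb (T : finType) (p : pred T) : #|[set x | p x]| = (\sum_x (p x : nat))%N.
Proof. rewrite -sum1_card big_mkcond /=; apply: eq_bigr => x _; rewrite inE; by case: (p x). Qed.

Lemma q_gt1 : (1 < #|F|)%N.
Proof. exact: card_finNzRing_gt1. Qed.

Lemma card_pts N m (W : 'M[F]_(m, N.+1)) :
  (#|[set P : point F N | (vp P <= W)%MS]| * #|F|.-1)%N = (#|F| ^ \rank W).-1.
Proof.
set S := [set P : point F N | _].
have cU : #|[set a : F | a != 0]| = #|F|.-1.
  by rewrite -(cardsC1 (0:F)); apply: eq_card => a; rewrite !inE.
rewrite -cU -cardsX.
pose f (x : point F N * F) := x.2 *: vp x.1.
have finj : {in setX S [set a : F | a != 0] &, injective f}.
  move=> [P a] [R b]; rewrite !inE /f /= => /andP[_ a0] /andP[_ b0] E.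
  have PR : P = R.
    apply: (@scale_norm _ _ _ _ (a^-1 * b)).
    by rewrite -scalerA -E scalerA mulVf // scale1r.
  subst R; congr (_, _).
  have : (a - b) *: vp P = 0 by rewrite scalerBl E subrr.
  move/eqP; rewrite scaler_eq0 (negbTE (vp_neq0 _)) orbF subr_eq0.
  by move/eqP.
rewrite -(card_in_imset finj).
have -> : f @: setX S [set a : F | a != 0] = [set v : 'rV_N.+1 | (v <= W)%MS] :\ 0.
  apply/setP => v; rewrite !inE; apply/imsetP/andP.
  - move=> [[P a]]; rewrite !inE /f /= => /andP [sP a0] ->.
    split; first by rewrite scaler_eq0 negb_or a0 vp_neq0.
    by rewrite scalemx_sub.
  - move=> [nz sv]; case: (exists_pt nz) => P [a a0 E].
    exists (P, a); last by rewrite /f E.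
    rewrite !inE a0 andbT.
    have -> : vp P = a^-1 *: v by rewrite E scalerA mulVf // scale1r.
    by rewrite scalemx_sub.
by rewrite -card_sub [in RHS](cardsD1 0) inE sub0mx.
Qed.

Lemma card_all_pts : #|[set: point F 2]| = (#|F| ^ 2 + #|F| + 1)%N.
Proof.
have := card_pts (1%:M : 'M[F]_(3, 3)); rewrite mxrank1.
have -> : [set P : point F 2 | (vp P <= 1%:M)%MS] = setT.
  by apply/setP => P; rewrite !inE submx1.
move=> E; have q1 := q_gt1.
apply/eqP; rewrite -(eqn_pmul2r (_ : (0 < #|F|.-1)%N)); last by lia.
rewrite E; apply/eqP.
set q := #|F| in q1 *; rewrite !expnS expn0.
case: q q1 => // q' _; rewrite /=. nia.
Qed.

Lemma card_line (P R : point F 2) : P != R ->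
  #|[set X : point F 2 | (vp X <= span2 P R)%MS]| = (#|F|.+1)%N.
Proof.
move=> PR; have := card_pts (span2 P R); rewrite rank_span2 //.
move=> E; have q1 := q_gt1.
apply/eqP; rewrite -(eqn_pmul2r (_ : (0 < #|F|.-1)%N)); last by lia.
rewrite E; apply/eqP.
set q := #|F| in q1 *; rewrite !expnS expn0.
case: q q1 => // q' _; rewrite /=. nia.
Qed.

End Cnt.

Section Oval.
Variable F : finFieldType.
Variable O : {set point F 2}.
Hypothesis hO : is_oval O.
Local Open Scope ring_scope.
Local Notation q := #|F|.

Lemma noncoll (P P' R : point F 2) : P \in O -> P' \in O -> R \in O ->
  P != P' -> P != R -> P' != R -> ~~ (vp R <= span2 P P')%MS.
Proof.
move=> PO P'O RO PP' PR P'R; apply/negP => sR.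
apply: (hO.2 P P' R) => //.
exists (line_through P P'); first exact: line_in_lines.
by rewrite !in_line sub_span2l sub_span2r sR.
Qed.

Definition tang (P R : point F 2) : bool :=
  (R != P) && [forall P' in O, (P' != P) ==> ~~ (vp R <= span2 P P')%MS].

Lemma tang_notin P R : tang P R -> R \notin O.
Proof.
move=> /andP [RP /forall_inP H]; apply/negP => RO.
by have := H R RO; rewrite RP sub_span2r.
Qed.

Lemma tang_line P R0 R : P \in O -> tang P R0 -> (vp R <= span2 P R0)%MS -> R != P ->
  tang P R.
Proof.
move=> PO tR0 sR RP; rewrite /tang RP /=.
have R0P : R0 != P by case/andP: tR0.
apply/forall_inP => P' P'O; apply/implyP => P'P; apply/negP => sR'.
have E1 : (span2 P R :=: span2 P P')%MS.
  by apply: span2_eq; rewrite ?sub_span2l // eq_sym.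
have E2 : (span2 P R :=: span2 P R0)%MS.
  by apply: span2_eq; rewrite ?sub_span2l // eq_sym.
have : (vp R0 <= span2 P P')%MS by rewrite -E1 E2 sub_span2r.
by case/andP: tR0 => _ /forall_inP /(_ P' P'O); rewrite P'P /= => /negP.
Qed.

Lemma card_O : #|O| = q.+1.
Proof. by case: hO. Qed.

Lemma nt_sum P R : P \in O ->
  (\sum_(P' in O | P' != P) ((R != P) && (vp R <= span2 P P')%MS) =
  (R != P) && ~~ [forall P' in O, (P' != P) ==> ~~ (vp R <= span2 P P')%MS])%N.
Proof.
move=> PO.
case: (boolP [forall P' in O, (P' != P) ==> ~~ (vp R <= span2 P P')%MS]) => H.
  rewrite andbF; apply: big1 => P' /andP [P'O P'P].
  by move/forall_inP: H => /(_ P' P'O); rewrite P'P /= => /negbTE ->; rewrite andbF.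
move: H => /forall_inPn [P0 P0O]; rewrite negb_imply negbK => /andP [P0P sR].
case: (eqVneq R P) => [->|RP]; first by rewrite /= big1.
rewrite /= (bigD1 P0) /=; last by rewrite P0O P0P.
rewrite sR big1 // => P' /andP [/andP [P'O P'P] P'P0].
suff -> : (vp R <= span2 P P')%MS = false by rewrite ?andbF.
apply/negbTE/negP => sR'.
have E1 : (span2 P R :=: span2 P P')%MS.
  by apply: span2_eq; rewrite ?sub_span2l // eq_sym.
have E2 : (span2 P R :=: span2 P P0)%MS.
  by apply: span2_eq; rewrite ?sub_span2l // eq_sym.
have : (vp P' <= span2 P P0)%MS by rewrite -E2 E1 sub_span2r.
apply/negP; apply: noncoll => //; by rewrite eq_sym.
Qed.

Lemma card_tang P : P \in O -> #|[set R | tang P R]| = q.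
Proof.
move=> PO.
have cnt : (#|[set R | tang P R]| + \sum_(P' in O | P' != P)
    #|[set R | (R != P) && (vp R <= span2 P P')%MS]| = q ^ 2 + q)%N.
  have -> : (q ^ 2 + q = #|[set R : point F 2 | R != P]|)%N.
    have -> : [set R | R != P] = [set~ P] by apply/setP => X; rewrite !inE.
    rewrite cardsC1 -cardsT card_all_pts; lia.
  under eq_bigr do rewrite card_sumb.
  rewrite !card_sumb.
  rewrite (exchange_big_dep xpredT) //= -big_split /=.
  apply: eq_bigr => R _.
  under eq_bigl do rewrite andbT.
  rewrite nt_sum // /tang.
  by case: (R != P); case: [forall _ in _, _].
have cl P' : P' \in O -> P' != P ->
    #|[set R | (R != P) && (vp R <= span2 P P')%MS]| = q.
  move=> P'O P'P.
  have PP' : P != P' by rewrite eq_sym.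
  have := card_line PP'.
  rewrite (cardsD1 P [set X | (vp X <= span2 P P')%MS]) inE sub_span2l [(_ + #|_|)%N]add1n => -[<-].
  by apply: eq_card => X; rewrite !inE.
have sumq : (\sum_(P' in O | P' != P)
    #|[set R | (R != P) && (vp R <= span2 P P')%MS]| =
    \sum_(P' in [set P' in O | P' != P]) q)%N.
  apply: eq_big => [X|X]; first by rewrite inE.
  by move=> /andP [P'O P'P]; rewrite cl.
rewrite sumq sum_nat_const in cnt.
have : #|[set P' in O | P' != P]| = q.
  have := card_O; rewrite (cardsD1 P O) PO [(_ + #|_|)%N]add1n => -[<-].
  by apply: eq_card => X; rewrite !inE andbC.
move=> E; rewrite E in cnt; move: cnt; lia.
Qed.

Lemma tang_uniq P R0 R : P \in O -> tang P R0 -> tang P R -> (vp R <= span2 P R0)%MS.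
Proof.
move=> PO t0 tR.
have R0P : R0 != P by case/andP: t0.
set S0 := [set X | (vp X <= span2 P R0)%MS & X != P].
have sub : S0 \subset [set X | tang P X].
  apply/subsetP => X; rewrite !inE => /andP [sX XP]; exact: tang_line t0 sX XP.
have cS : #|S0| = q.
  have PR0 : P != R0 by rewrite eq_sym.
  have := card_line PR0.
  rewrite (cardsD1 P [set X | (vp X <= span2 P R0)%MS]) inE sub_span2l [(_ + #|_|)%N]add1n => -[<-].
  by apply: eq_card => X; rewrite !inE andbC.
have : S0 == [set X | tang P X] by rewrite eqEcard sub cS (card_tang PO) leqnn.
move/eqP => E.
have : R \in S0 by rewrite E inE.
by rewrite inE => /andP[].
Qed.

End Oval.

Section Sec.
Variable F : finFieldType.
Variable O : {set point F 2}.
Hypothesis hO : is_oval O.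
Local Open Scope ring_scope.
Local Notation q := #|F|.

Lemma bin2_mul k : ('C(k, 2) * 2 = k * k.-1)%N.
Proof. by have := bin_ffact k 2; rewrite ffactnS ffactn1. Qed.

Lemma pairs_card (T : finType) (A : {set T}) :
  (\sum_(x in A) \sum_(y in A | y != x) 1 = #|A| * #|A|.-1)%N.
Proof.
rewrite -sum_nat_const; apply: eq_bigr => x xA.
rewrite (cardsD1 x A) xA [(_ + #|_|)%N]add1n /= -sum1_card.
by apply: eq_bigl => y; rewrite !inE andbC.
Qed.

Lemma pair_lines (Q P P' : point F 2) : P != P' ->
  (\sum_(l in lines F 2 | Q \in l) ((P \in l) && (P' \in l)) =
   (vp Q <= span2 P P')%MS)%N.
Proof.
move=> PP'; case: (boolP (vp Q <= span2 P P')%MS) => H.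
  rewrite (bigD1 (line_through P P')) /=; last by rewrite line_in_lines // in_line H.
  rewrite !in_line sub_span2l sub_span2r big1 // => l /andP [/andP [lL Ql] ln].
  case Pl: (P \in l) => //=; case P'l: (P' \in l) => //=.
  by rewrite (line_uniq lL Pl P'l PP') eqxx in ln.
apply: big1 => l /andP [lL Ql].
case Pl: (P \in l) => //=; case P'l: (P' \in l) => //=.
by move: Ql; rewrite (line_uniq lL Pl P'l PP') in_line (negbTE H).
Qed.

Definition sec2 (Q : point F 2) : nat :=
  \sum_(P in O) \sum_(P' in O | P' != P) (vp Q <= span2 P P')%MS.

Lemma sm2 Q : (secant_mult O Q * 2 = sec2 Q)%N.
Proof.
rewrite /secant_mult big_distrl /=.
have step l : ('C(#|l :&: O|, 2) * 2 =
    \sum_(P in O) \sum_(P' in O | P' != P) ((P \in l) && (P' \in l)))%N.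
  rewrite bin2_mul -pairs_card big_mkcond [RHS]big_mkcond /=.
  apply: eq_bigr => P _; rewrite inE.
  case Pl: (P \in l); case PO: (P \in O) => //=; last first.
    by rewrite big1 // => P' _; rewrite andbF.
  rewrite big_mkcond [RHS]big_mkcond /=; apply: eq_bigr => P' _; rewrite inE.
  by case: (P' \in l); case: (P' \in O); case: (P' != P).
under eq_bigr do rewrite step.
rewrite exchange_big /sec2; apply: eq_bigr => P PO.
rewrite exchange_big; apply: eq_bigr => P' /andP [P'O P'P].
by rewrite pair_lines // eq_sym.
Qed.

Definition tset (Q : point F 2) := [set P in O | tang O P Q].

Lemma sec_tang Q : Q \notin O -> (sec2 Q + #|tset Q| = q.+1)%N.
Proof.
move=> QO.
have ct : #|tset Q| = (\sum_(P in O) (tang O P Q : nat))%N.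
  rewrite -sum1_card big_mkcond [RHS]big_mkcond; apply: eq_bigr => P _.
  by rewrite inE; case: (P \in O); case: tang.
rewrite ct -(card_O hO) -sum1_card /sec2.
rewrite -big_split /=; apply: eq_bigr => P PO.
have QP : Q != P by apply: contraNneq QO => ->.
have := nt_sum hO Q PO.
under eq_bigr do rewrite QP /=.
move=> ->; rewrite /tang QP /=.
by case: [forall _ in _, _].
Qed.

Lemma tset_even Q : odd q -> Q \notin O -> ~~ odd #|tset Q|.
Proof.
move=> oq QO; have := sec_tang QO; rewrite -sm2.
have := odd_double_half q; rewrite oq.
move=> E1 E2. apply/negP => ot. move: E1 E2 ot.
set t := #|tset Q|. have := odd_double_half t.
case: (odd t) => //= E3 E1 E2 _. lia.
Qed.

Lemma bad_pair (P1 Q P R R' : point F 2) : P1 \in O -> tang O P1 Q -> P \in O -> P != P1 ->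
  (vp R <= span2 P1 Q)%MS -> (vp R' <= span2 P1 Q)%MS -> R != R' ->
  tang O P R -> tang O P R' -> False.
Proof.
move=> P1O tQ PO PP1 sR sR' RR' tR tR'.
have P1Q : P1 != Q by move: tQ => /andP []; rewrite eq_sym.
have PR : P != R by move: tR => /andP []; rewrite eq_sym.
have s1 := tang_uniq hO PO tR tR'.
have E1 : (span2 R R' :=: span2 P R)%MS by apply: span2_eq; rewrite ?sub_span2r.
have E2 : (span2 R R' :=: span2 P1 Q)%MS by apply: span2_eq.
have sP : (vp P <= span2 P1 Q)%MS by rewrite -E2 E1 sub_span2l.
have E3 : (span2 P1 P :=: span2 P1 Q)%MS by apply: span2_eq; rewrite ?sub_span2l // eq_sym.
have sQ : (vp Q <= span2 P1 P)%MS by rewrite E3 sub_span2r.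
move: tQ => /andP [_ /forall_inP /(_ P PO)]; rewrite PP1 /= => /negP; exact.
Qed.

Lemma qvist Q : odd q -> Q \notin O -> (#|tset Q| <= 2)%N.
Proof.
move=> oq QO; rewrite leqNgt; apply/negP => t3.
have [P1 P1t] : exists P1, P1 \in tset Q by apply/card_gt0P; lia.
have : (1 < #|tset Q :\ P1|)%N by move: t3; rewrite (cardsD1 P1 (tset Q)) P1t; lia.
move=> t2; have [Pa Pat] : exists Pa, Pa \in tset Q :\ P1 by apply/card_gt0P; lia.
have : (0 < #|(tset Q :\ P1) :\ Pa|)%N by move: t2; rewrite (cardsD1 Pa (tset Q :\ P1)) Pat; lia.
move=> /card_gt0P [Pb]; rewrite !inE => /andP [PbPa /andP [PbP1 /andP [PbO tPb]]].
move: Pat P1t; rewrite !inE => /andP [PaP1 /andP [PaO tPa]] /andP [P1O tP1].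
have P1Q : P1 != Q by move: tP1 => /andP []; rewrite eq_sym.
set D := [set R | (vp R <= span2 P1 Q)%MS & R != P1].
have cD : #|D| = q.
  have := card_line P1Q.
  rewrite (cardsD1 P1 [set X | (vp X <= span2 P1 Q)%MS]) inE sub_span2l [(_ + #|_|)%N]add1n => -[<-].
  by apply: eq_card => X; rewrite !inE andbC.
have tD R : R \in D -> tang O P1 R.
  by rewrite inE => /andP [sR RP1]; apply: tang_line tP1 sR RP1.
have ex R : R \in D -> exists P', P' \in tset R :\ P1.
  move=> RD; apply/card_gt0P.
  have RO : R \notin O by apply: tang_notin (tD R RD).
  have := tset_even oq RO.
  have : P1 \in tset R by rewrite inE P1O tD.
  move=> P1in; rewrite (cardsD1 P1 (tset R)) P1in /=.
  by case: #|_| => // -[].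
pose f R := odflt P1 [pick P' in tset R :\ P1].
have fP R : R \in D -> [/\ f R \in O, f R != P1 & tang O (f R) R].
  move=> RD; rewrite /f; case: pickP => [P' |]; last first.
    by move=> H; case: (ex R RD) => P' /[dup] P'in; rewrite inE in P'in; rewrite H.
  by rewrite /= !inE => /andP [-> /andP [-> ->]].
have finj : {in D &, injective f}.
  move=> R R' RD R'D E; apply/eqP; apply/negP => /negP RR'.
  case: (fP R RD) => fO fP1 tR; case: (fP R' R'D) => _ _; rewrite -E => tR'.
  move: RD R'D; rewrite !inE => /andP [sR _] /andP [sR' _].
  exact: (bad_pair P1O tP1 fO fP1 sR sR' RR' tR tR').
have imD : f @: D = O :\ P1.
  apply/eqP; rewrite eqEcard; apply/andP; split.
    apply/subsetP => X /imsetP [R RD ->]; case: (fP R RD) => fO fP1 _.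
    by rewrite !inE fP1 fO.
  rewrite (card_in_imset finj) cD.
  by have := card_O hO; rewrite (cardsD1 P1 O) P1O; lia.
have QD : Q \in D by rewrite inE sub_span2r eq_sym P1Q.
have [Pc [PcO PcP1 tPc PcfQ]] : exists Pc, [/\ Pc \in O, Pc != P1, tang O Pc Q & Pc != f Q].
  case: (eqVneq Pa (f Q)) => [EQ|NE]; last by exists Pa.
  exists Pb; split => //; by rewrite -EQ.
have : Pc \in f @: D by rewrite imD !inE PcP1.
move=> /imsetP [R RD EPc].
have RQ : R != Q by apply: contraNneq PcfQ => <-; rewrite EPc.
case: (fP R RD) => _ _; rewrite -EPc => tR.
move: RD; rewrite inE => /andP [sR _].
exact: (bad_pair P1O tP1 PcO PcP1 sR (sub_span2r _ _) RQ tR tPc).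
Qed.

Lemma sec_lower Q : odd q -> Q \notin O -> ((q.-1)./2 <= secant_mult O Q)%N.
Proof.
move=> oq QO; have := sec_tang QO; rewrite -sm2; have := qvist oq QO.
have := odd_double_half q; rewrite oq; lia.
Qed.

End Sec.

Section Wt.
Variable F : finFieldType.
Variable n : nat.
Local Open Scope ring_scope.
Local Notation q := #|F|.

Definition supp (e : 'rV[F]_n) := [set i : 'I_n | e 0 i != 0].
Lemma wtE (e : 'rV[F]_n) : wt e = #|supp e|. Proof. by []. Qed.

Lemma wt0 : wt (0 : 'rV[F]_n) = 0%N.
Proof. by apply/eqP; rewrite cards_eq0; apply/eqP/setP => i; rewrite !inE !mxE eqxx. Qed.

Lemma wt_eq0 (e : 'rV[F]_n) : wt e = 0%N -> e = 0.
Proof.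
move/eqP; rewrite cards_eq0 => /eqP E; apply/rowP => i; rewrite mxE.
apply/eqP; apply/negPn/negP => H.
have : i \in [set i | e 0 i != 0] by rewrite inE.
by rewrite E inE.
Qed.

Lemma wtD (x y : 'rV[F]_n) : (wt (x + y) <= wt x + wt y)%N.
Proof.
apply: leq_trans (_ : #|supp x :|: supp y| <= _)%N; last by rewrite cardsU leq_subr.
apply: subset_leq_card; apply/subsetP => i; rewrite !inE mxE.
by apply: contraR; rewrite negb_or !negbK => /andP [/eqP -> /eqP ->]; rewrite addr0.
Qed.

Lemma wtN (x : 'rV[F]_n) : wt (- x) = wt x.
Proof. by apply: eq_card => i; rewrite !inE mxE oppr_eq0. Qed.

Lemma wtB (x y : 'rV[F]_n) : (wt (x - y) <= wt x + wt y)%N.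
Proof. by rewrite -(wtN y) wtD. Qed.

Lemma wtZ (a : F) (x : 'rV[F]_n) : a != 0 -> wt (a *: x) = wt x.
Proof. by move=> a0; apply: eq_card => i; rewrite !inE mxE mulf_eq0 negb_or a0. Qed.

Definition dl (i : 'I_n) : 'rV[F]_n := delta_mx 0 i.

Lemma dlE i j : dl i 0 j = (i == j)%:R.
Proof. by rewrite mxE eqxx /= eq_sym. Qed.

Lemma wt1 (a : F) i : (wt (a *: dl i) <= 1)%N.
Proof.
apply: leq_trans (_ : #|[set i]| <= _)%N; last by rewrite cards1.
apply: subset_leq_card; apply/subsetP => j; rewrite !inE mxE dlE.
by case: (eqVneq j i) => //= _; rewrite mulr0 eqxx.
Qed.

Lemma wt2 (a b : F) i j : (wt (a *: dl i + b *: dl j) <= 2)%N.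
Proof.
apply: leq_trans (_ : #|[set i; j]| <= _)%N; last by rewrite cards2; case: (_ != _).
apply: subset_leq_card; apply/subsetP => k; rewrite !inE !mxE !eqxx /=.
case: (eqVneq k i) => //= _; case: (eqVneq k j) => //= _.
by rewrite !mulr0 addr0 eqxx.
Qed.

Lemma supp2 (a b : F) i j : a != 0 -> b != 0 -> i != j ->
  supp (a *: dl i + b *: dl j) = [set i; j].
Proof.
move=> a0 b0 ij; apply/setP => k; rewrite !inE !mxE !eqxx /=.
case: (eqVneq k i) => [->|ki] /=.
  by rewrite (negbTE ij) mulr1 mulr0 addr0 a0.
case: (eqVneq k j) => [_|kj] /=.
  by rewrite mulr0 mulr1 add0r b0.
by rewrite !mulr0 addr0 eqxx.
Qed.

Lemma card_supp (S : {set 'I_n}) : #|[set e : 'rV[F]_n | supp e == S]| = (q.-1 ^ #|S|)%N.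
Proof.
pose F0 (i : 'I_n) : pred F := if i \in S then predC1 0 else pred1 0.
pose g (f : {ffun 'I_n -> F}) : 'rV[F]_n := \row_i f i.
have ginj : injective g.
  by move=> f1 f2 E; apply/ffunP => i; have := congr1 (fun r : 'rV[F]_n => r 0 i) E; rewrite /g !mxE.
have -> : [set e : 'rV[F]_n | supp e == S] = g @: [set f | f \in family F0].
  apply/setP => e; rewrite inE; apply/eqP/imsetP.
  - move=> Se; exists [ffun i => e 0 i]; last by apply/rowP => i; rewrite /g !mxE ffunE.
    rewrite inE; apply/familyP => i; rewrite ffunE /F0 -Se inE.
    by case E0: (e 0 i == 0); rewrite /= !inE E0.
  - move=> [f]; rewrite inE => /familyP Hf ->; apply/setP => i.
    rewrite inE /g mxE; have := Hf i; rewrite /F0.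
    by case: (i \in S); rewrite !inE; [move=> -> | move=> /eqP ->; rewrite eqxx].
rewrite (card_imset _ ginj) cardsE card_family foldrE big_map big_enum /=.
rewrite -prod_nat_const [RHS]big_mkcond /=; apply: eq_big => // i _; rewrite /F0.
by case: (i \in S); rewrite ?cardC1 ?card1.
Qed.

Lemma card_wt k : #|[set e : 'rV[F]_n | wt e == k]| = ('C(n, k) * q.-1 ^ k)%N.
Proof.
have step e : (wt e == k : nat) = (\sum_(S : {set 'I_n} | #|S| == k) (supp e == S))%N.
  case: (boolP (#|supp e| == k)) => H.
    rewrite (bigD1 (supp e)) //= eqxx big1 ?addn0 // => S /andP [_ SE].
    by rewrite eq_sym (negbTE SE).
  rewrite big1 // => S /eqP SK; case: eqP => // E.
  by rewrite E SK eqxx in H.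
rewrite card_sumb; under eq_bigr do rewrite step.
rewrite exchange_big /=.
have -> : (\sum_(S : {set 'I_n} | #|S| == k) \sum_(e : 'rV[F]_n) (supp e == S) =
    \sum_(S in [set S : {set 'I_n} | #|S| == k]) q.-1 ^ k)%N.
  apply: eq_big => [S|S]; first by rewrite inE.
  move=> /eqP SK; rewrite -card_sumb card_supp SK //.
by rewrite sum_nat_const card_draws card_ord.
Qed.

End Wt.

Lemma bigmin_le (I : finType) (P : pred I) (f : I -> nat) m i :
  P i -> (\big[minn/m]_(j | P j) f j <= f i)%N.
Proof.
move=> Pi; have : i \in index_enum I by rewrite mem_index_enum.
elim: (index_enum I) => [|j r IH] //; rewrite inE big_cons => /orP [/eqP <-|ir].
  by rewrite Pi geq_minl.
by case: (P j); rewrite ?geq_min IH ?orbT.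
Qed.

Lemma le_bigmin (I : finType) (P : pred I) (f : I -> nat) m k :
  (k <= m)%N -> (forall i, P i -> k <= f i)%N -> (k <= \big[minn/m]_(j | P j) f j)%N.
Proof.
move=> km H; apply: (big_ind (fun v => k <= v)%N) => //.
by move=> x y kx ky; rewrite leq_min kx ky.
Qed.

Lemma grow (T : finType) (S : {set T}) m :
  (#|S| <= m <= #|T|)%N -> exists2 U : {set T}, S \subset U & #|U| = m.
Proof.
elim: m => [|m IH] /andP [Sm mT].
  by exists S => //; move: Sm; rewrite leqn0 => /eqP.
case: (ltngtP #|S| m.+1) Sm => // [SltM | SeqM] _; last by exists S.
have [U SU Um] : exists2 U : {set T}, S \subset U & #|U| = m.
  by apply: IH; rewrite -ltnS SltM ltnW.
have : (0 < #|~: U|)%N by have := cardsC U; lia.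
case/card_gt0P => x; rewrite inE => xU.
exists (x |: U); first exact: subset_trans SU (subsetUr _ _).
by rewrite cardsU1 xU Um.
Qed.

Lemma three_of (T : finType) (U : {set T}) : #|U| = 3%N ->
  exists i j k, [/\ i != j, i != k, j != k &
    forall l, l \in U -> [\/ l = i, l = j | l = k]].
Proof.
move=> U3; have [i iU] : exists i, i \in U by apply/card_gt0P; rewrite U3.
have : #|U :\ i| = 2%N by move: U3; rewrite (cardsD1 i U) iU; lia.
move/eqP/cards2P => [j [k [jk E]]].
have : i \notin U :\ i by rewrite !inE eqxx.
rewrite E !inE negb_or => /andP [ij ik].
exists i, j, k; split => //; rewrite ?(eq_sym i) //.
move=> l lU; case: (eqVneq l i) => [->|li]; first by constructor 1.
have : l \in U :\ i by rewrite !inE li lU.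
by rewrite E !inE => /orP [/eqP ->|/eqP ->]; [constructor 2 | constructor 3].
Qed.

Section Code.
Variable F : finFieldType.
Variable O : {set point F 2}.
Hypothesis hO : is_oval O.
Hypothesis oq : odd #|F|.
Local Notation q := #|F|.
Local Open Scope ring_scope.

Lemma q_ge3 : (3 <= q)%N.
Proof. have := q_gt1 F; move: oq; case: q => [|[|[|]]] //. Qed.

Lemma indep3 (P1 P2 P3 : point F 2) a b c : P1 \in O -> P2 \in O -> P3 \in O ->
  P1 != P2 -> P1 != P3 -> P2 != P3 ->
  a *: vp P1 + (b *: vp P2 + c *: vp P3) = 0 -> [/\ a = 0, b = 0 & c = 0].
Proof.
move=> P1O P2O P3O P12 P13 P23 E.
have c0 : c = 0.
  apply/eqP/negPn/negP => c0.
  have : (vp P3 <= span2 P1 P2)%MS.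
    have -> : vp P3 = - c^-1 *: (a *: vp P1 + b *: vp P2).
      apply: (scalerI c0); rewrite scalerA mulrN mulfV // scaleN1r.
      by apply/eqP; rewrite -addr_eq0 -E addrC -addrA.
    by rewrite scalemx_sub // addmx_sub // scalemx_sub ?sub_span2l ?sub_span2r.
  by move=> H; have := noncoll hO P1O P2O P3O P12 P13 P23; rewrite H.
move: E; rewrite c0 scale0r addr0 => E.
have b0 : b = 0.
  apply/eqP/negPn/negP => b0.
  have : P2 = P1.
    apply: (@scale_norm _ _ _ _ (- b^-1 * a)).
    apply: (scalerI b0); rewrite scalerA mulrA mulrN mulfV // mulN1r scaleNr.
    by apply/eqP; rewrite -addr_eq0 addrC E.
  by move=> E2; rewrite E2 eqxx in P12.
move: E; rewrite b0 scale0r addr0 => /eqP; rewrite scaler_eq0 (negbTE (vp_neq0 _)) orbF.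
by move/eqP.
Qed.

Lemma rank3 m (W : 'M[F]_(m, 3)) (P1 P2 P3 : point F 2) : P1 \in O -> P2 \in O -> P3 \in O ->
  P1 != P2 -> P1 != P3 -> P2 != P3 ->
  (vp P1 <= W)%MS -> (vp P2 <= W)%MS -> (vp P3 <= W)%MS -> \rank W = 3%N.
Proof.
move=> P1O P2O P3O P12 P13 P23 s1 s2 s3.
have sA : (span2 P1 P2 + vp P3 <= W)%MS by rewrite addsmx_sub col_mx_sub s1 s2 s3.
have r : \rank (span2 P1 P2 + vp P3)%MS = 3%N.
  have := mxrank_sum_cap (span2 P1 P2) (vp P3).
  rewrite rank_span2 // rank_rV vp_neq0.
  have -> : \rank (span2 P1 P2 :&: vp P3)%MS = 0%N.
    have le1 : (\rank (span2 P1 P2 :&: vp P3)%MS <= 1)%N.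
      by apply: leq_trans (mxrankS (capmxSr _ _)) _; rewrite rank_rV vp_neq0.
    case: (mxrank_leqif_sup (capmxSr (span2 P1 P2) (vp P3))) => _.
    rewrite rank_rV vp_neq0 /=.
    case: (ltngtP (\rank (span2 P1 P2 :&: vp P3)%MS) 1) le1 => //; first by case: (\rank _).
    move=> -> _ /esym /(submx_trans) /(_ (capmxSl _ _)) H.
    by have := noncoll hO P1O P2O P3O P12 P13 P23; rewrite H.
  by rewrite addn0.
by apply/eqP; rewrite eqn_leq rank_leq_col /= -{1}r mxrankS.
Qed.

Lemma three_pts : exists P1 P2 P3, [/\ P1 \in O, P2 \in O & P3 \in O] /\
  [/\ P1 != P2, P1 != P3 & P2 != P3].
Proof.
have cO := card_O hO; have q3 := q_ge3.
have [P1 P1O] : exists P1, P1 \in O by apply/card_gt0P; lia.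
have [P2 P2O] : exists P2, P2 \in O :\ P1.
  by apply/card_gt0P; move: cO; rewrite (cardsD1 P1 O) P1O; lia.
have [P3 P3O] : exists P3, P3 \in (O :\ P1) :\ P2.
  apply/card_gt0P; move: cO; rewrite (cardsD1 P1 O) P1O (cardsD1 P2 (O :\ P1)) P2O; lia.
move: P2O P3O; rewrite !inE => /andP [P21 P2O] /andP [P32 /andP [P31 P3O]].
by exists P1, P2, P3; split; split => //; rewrite eq_sym.
Qed.

End Code.

Section Code2.
Variable F : finFieldType.
Variable O : {set point F 2}.
Hypothesis hO : is_oval O.
Hypothesis oq : odd #|F|.
Local Notation q := #|F|.
Local Open Scope ring_scope.
Variable n : nat.
Hypothesis hn : n = q.+1.
Variable C : 'M[F]_n.
Variable H : 'M[F]_(3, n).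
Variable Pf : 'I_n -> point F 2.
Variable cf : 'I_n -> F.
Hypothesis Pf_inj : injective Pf.
Hypothesis OE : O = [set Pf i | i : 'I_n].
Hypothesis cf0 : forall i, cf i != 0.
Hypothesis colE : forall i, col i H = cf i *: (vp (Pf i))^T.
Hypothesis CE : (C == kermx H^T)%MS.
Local Notation dl := (@dl F n).

Lemma rowHt i : row i H^T = cf i *: vp (Pf i).
Proof. by rewrite -tr_col colE linearZ /= trmxK. Qed.

Definition syn (x : 'rV[F]_n) : 'rV[F]_3 := x *m H^T.

Lemma synE x : syn x = \sum_i (x 0 i * cf i) *: vp (Pf i).
Proof. by rewrite /syn mulmx_sum_row; apply: eq_bigr => i _; rewrite rowHt scalerA. Qed.

Lemma synD x y : syn (x + y) = syn x + syn y. Proof. by rewrite /syn mulmxDl. Qed.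
Lemma synB x y : syn (x - y) = syn x - syn y. Proof. by rewrite /syn mulmxBl. Qed.
Lemma synZ a x : syn (a *: x) = a *: syn x. Proof. by rewrite /syn scalemxAl. Qed.
Lemma syn_dl i : syn (dl i) = cf i *: vp (Pf i). Proof. by rewrite /syn /dl -rowE rowHt. Qed.

Lemma code_mem c : (c \in codewords C) = (syn c == 0).
Proof. by have /eqmxP E := CE; rewrite inE E sub_kermx. Qed.

Lemma PfO i : Pf i \in O. Proof. by rewrite OE; apply: imset_f. Qed.
Lemma inO P : P \in O -> exists i, P = Pf i.
Proof. by rewrite OE => /imsetP [i _ ->]; exists i. Qed.

Lemma n_ge4 : (4 <= n)%N. Proof. by have := q_ge3 oq; rewrite hn. Qed.

Lemma rankHt : \rank H^T = 3%N.
Proof.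
have [P1 [P2 [P3 [[P1O P2O P3O] [P12 P13 P23]]]]] := three_pts hO oq.
apply: (rank3 hO P1O P2O P3O P12 P13 P23).
all: [> case: (inO P1O) => i -> | case: (inO P2O) => i -> | case: (inO P3O) => i -> ].
all: have -> : vp (Pf i) = (cf i)^-1 *: row i H^T by rewrite rowHt scalerA mulVf // scale1r.
all: by rewrite scalemx_sub // row_sub.
Qed.

Lemma code_dimE : code_dim C = (n - 3)%N.
Proof. by rewrite /code_dim (eqmx_rank CE) mxrank_ker rankHt. Qed.

Lemma noLow e : syn e = 0 -> (wt e <= 3)%N -> e = 0.
Proof.
move=> se we.
have [U SU U3] : exists2 U : {set 'I_n}, supp e \subset U & #|U| = 3%N.
  by apply: grow; rewrite -wtE we card_ord /= (leq_trans _ n_ge4).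
have [i [j [k [ij ik jk Uijk]]]] := three_of U3.
have out l : l != i -> l != j -> l != k -> e 0 l = 0.
  move=> li lj lk; apply/eqP/negPn/negP => el.
  have : l \in U by apply: (subsetP SU); rewrite inE.
  by case/Uijk => /eqP; rewrite ?(negbTE li) ?(negbTE lj) ?(negbTE lk).
move: se; rewrite synE (bigD1 i) // (bigD1 j) /=; last by rewrite eq_sym.
rewrite (bigD1 k) /=; last by rewrite !(eq_sym k) ik jk.
rewrite big1; last first.
  by move=> l /andP [/andP [li lj] lk]; rewrite out // mul0r scale0r.
rewrite addr0 => E.
have [ai [aj ak]] : [/\ e 0 i * cf i = 0, e 0 j * cf j = 0 & e 0 k * cf k = 0].
  apply: (indep3 hO (PfO i) (PfO j) (PfO k)); rewrite ?(inj_eq Pf_inj) //.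
have z l : e 0 l = 0.
  case: (eqVneq l i) => [->|li]; first by move/eqP: ai; rewrite mulf_eq0 (negbTE (cf0 _)) orbF => /eqP.
  case: (eqVneq l j) => [->|lj]; first by move/eqP: aj; rewrite mulf_eq0 (negbTE (cf0 _)) orbF => /eqP.
  case: (eqVneq l k) => [->|lk]; first by move/eqP: ak; rewrite mulf_eq0 (negbTE (cf0 _)) orbF => /eqP.
  exact: out.
by apply/rowP => l; rewrite z mxE.
Qed.


Lemma wit4 : exists2 e : 'rV[F]_n, syn e = 0 & (e != 0) && (wt e <= 4)%N.
Proof.
have h4 := n_ge4.
pose w := widen_ord h4.
have winj : injective w by move=> a b /(congr1 val) /= /val_inj.
pose M : 'M[F]_(4, 3) := \matrix_(k < 4) row (w k) H^T.
have rK : (0 < \rank (kermx M))%N by rewrite mxrank_ker; have := rank_leq_col M; lia.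
have [r Kr] : exists r, row r (kermx M) != 0.
  case: (boolP [exists r, row r (kermx M) != 0]) => [/existsP //| /existsPn H0].
  have K0 : kermx M = 0.
    by apply/row_matrixP => r; rewrite row0; apply/eqP; move: (H0 r); rewrite negbK.
  by rewrite K0 mxrank0 in rK.
set u := row r (kermx M).
have uM : u *m M = 0 by apply/sub_kermxP; exact: row_sub.
pose e : 'rV[F]_n := \row_(l < n) \sum_(k < 4 | w k == l) u 0 k.
exists e.
  rewrite /syn mulmx_sum_row -[RHS]uM [u *m M]mulmx_sum_row.
  under eq_bigr do rewrite mxE scaler_suml.
  rewrite (exchange_big_dep xpredT) //=; apply: eq_bigr => k _.
  by rewrite (big_pred1 (w k)) ?rowK // => l; rewrite /= eq_sym.
apply/andP; split.
  have [k0 uk0] : exists k0, u 0 k0 != 0.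
    case: (boolP [exists k0, u 0 k0 != 0]) => [/existsP //| /existsPn H0].
    have u0 : u = 0 by apply/rowP => k; rewrite [RHS]mxE; apply/eqP; move: (H0 k); rewrite negbK.
    by move: Kr; rewrite -/u u0 eqxx.
  apply/negP => /eqP e0; move: uk0.
  have : e 0 (w k0) = u 0 k0.
    by rewrite mxE (big_pred1 k0) // => k; rewrite /= (inj_eq winj).
  by rewrite e0 mxE => <-; rewrite eqxx.
apply: leq_trans (_ : #|w @: [set: 'I_4]| <= 4)%N; last by rewrite (leq_trans (leq_imset_card _ _)) // cardsT card_ord.
apply: subset_leq_card; apply/subsetP => l; rewrite inE mxE => nz.
apply/imsetP; case: (boolP [exists k, w k == l]) => [/existsP [k /eqP <-]|/existsPn H0].
  by exists k.
by move: nz; rewrite big1 ?eqxx // => k wk; move: (H0 k); rewrite wk.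
Qed.

Lemma min_distE : min_dist C = 4%N.
Proof.
apply/eqP; rewrite eqn_leq; apply/andP; split.
  have [e se /andP [e0 we]] := wit4.
  apply: leq_trans we; apply: (@bigmin_le _ (fun c => (c \in codewords C) && (c != 0))).
  by rewrite code_mem se eqxx e0.
apply: le_bigmin; first exact: n_ge4.
move=> c /andP [cC c0]; rewrite leqNgt; apply/negP => lt4.
have sc : syn c = 0 by apply/eqP; rewrite -code_mem.
rewrite ltnS in lt4.
by rewrite (noLow sc lt4) eqxx in c0.
Qed.


Lemma distC_le x c : c \in codewords C -> (distC C x <= hdist x c)%N.
Proof. exact: (@bigmin_le _ (fun c => c \in codewords C)). Qed.

Lemma distC_ge x k : (k <= n)%N -> (forall c, c \in codewords C -> k <= hdist x c)%N ->
  (k <= distC C x)%N.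
Proof. exact: le_bigmin. Qed.

Lemma hdist_sub x e : syn e = syn x -> (distC C x <= wt e)%N.
Proof.
move=> se; have : x - e \in codewords C by rewrite code_mem synB se subrr.
by move/(distC_le x); rewrite /hdist opprB addrC subrK.
Qed.

Lemma cover0 x : syn x = 0 -> distC C x = 0%N.
Proof.
move=> sx; apply/eqP; rewrite -leqn0.
by apply: leq_trans (hdist_sub (_ : syn 0 = syn x)) _; rewrite ?wt0 // sx /syn mul0mx.
Qed.

Lemma cover1 x i a : syn x = a *: vp (Pf i) -> (distC C x <= 1)%N.
Proof.
move=> sx; apply: leq_trans (hdist_sub (e := (a / cf i) *: dl i) _) (wt1 _ _).
by rewrite synZ syn_dl scalerA divfK ?cf0 // sx.
Qed.

Definition ka0 (X P R : point F 2) : F := (lsubmx (vp X *m pinvmx (span2 P R))) 0 0.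
Definition ka1 (X P R : point F 2) : F := (rsubmx (vp X *m pinvmx (span2 P R))) 0 0.

Lemma kaE X P R : (vp X <= span2 P R)%MS -> vp X = ka0 X P R *: vp P + ka1 X P R *: vp R.
Proof.
move/mulmxKpV => E; rewrite -{1}E -[vp X *m _]hsubmxK mul_row_col.
by rewrite (mx11_scalar (lsubmx _)) (mx11_scalar (rsubmx _)) !mul_scalar_mx.
Qed.

Lemma ka_nz X P R : (vp X <= span2 P R)%MS -> X != P -> X != R ->
  (ka0 X P R != 0) && (ka1 X P R != 0).
Proof.
move=> s XP XR; have E := kaE s; apply/andP; split; apply/negP => /eqP k0.
  by move: E; rewrite k0 scale0r add0r => /scale_norm XE; rewrite XE eqxx in XR.
by move: E; rewrite k0 scale0r addr0 => /scale_norm XE; rewrite XE eqxx in XP.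
Qed.

Definition ep (a : F) (Q : point F 2) (p : 'I_n * 'I_n) : 'rV[F]_n :=
  (a * ka0 Q (Pf p.1) (Pf p.2) / cf p.1) *: dl p.1 +
  (a * ka1 Q (Pf p.1) (Pf p.2) / cf p.2) *: dl p.2.

Lemma syn_ep a Q p : (vp Q <= span2 (Pf p.1) (Pf p.2))%MS -> syn (ep a Q p) = a *: vp Q.
Proof.
move=> s; rewrite synD !synZ !syn_dl !scalerA !divfK ?cf0 //.
by rewrite [in RHS](kaE s) scalerDr !scalerA.
Qed.

Definition PS (Q : point F 2) :=
  [set p : 'I_n * 'I_n | (p.1 < p.2)%N && (vp Q <= span2 (Pf p.1) (Pf p.2))%MS].

Lemma supp_ep a Q p : a != 0 -> Q \notin O -> p \in PS Q -> supp (ep a Q p) = [set p.1; p.2].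
Proof.
rewrite inE => a0 QO /andP [lt s].
have QP i : Q != Pf i by apply: contraNneq QO => ->; exact: PfO.
have /andP [k0 k1] := ka_nz s (QP _) (QP _).
apply: supp2; rewrite ?mulf_neq0 ?invr_neq0 ?cf0 //.
by apply/eqP => E; rewrite E ltnn in lt.
Qed.

Lemma wt_ep a Q p : a != 0 -> Q \notin O -> p \in PS Q -> wt (ep a Q p) = 2%N.
Proof.
move=> a0 QO pP; rewrite wtE (supp_ep a0 QO pP) cards2.
by move: pP; rewrite inE => /andP [lt _]; case: eqP => // E; rewrite E ltnn in lt.
Qed.

Lemma ep_inj a Q : a != 0 -> Q \notin O -> {in PS Q &, injective (ep a Q)}.
Proof.
move=> a0 QO p p' pP p'P E.
have := supp_ep a0 QO pP; rewrite E (supp_ep a0 QO p'P) => S.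
have h1 : p.1 \in [set p'.1; p'.2] by rewrite S !inE eqxx.
have h2 : p.2 \in [set p'.1; p'.2] by rewrite S !inE eqxx orbT.
move: pP p'P h1 h2; rewrite !inE.
case: p p' {E S} => [i j] [k l] /= /andP [lt _] /andP [lt' _].
case/orP => /eqP E1; case/orP => /eqP E2; subst; try (exfalso; lia).
  by [].
Qed.

Lemma card_PS Q : (#|PS Q| * 2 = secant_mult O Q * 2)%N.
Proof.
rewrite sm2 /sec2.
pose g i j := (vp Q <= span2 (Pf i) (Pf j))%MS.
have E1 : (\sum_(P in O) \sum_(P' in O | P' != P) (vp Q <= span2 P P')%MS =
    \sum_(i : 'I_n) \sum_(j : 'I_n) ((i < j)%N && g i j) + \sum_(i : 'I_n) \sum_(j : 'I_n) ((j < i)%N && g i j))%N.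
  rewrite OE big_imset /=; last by move=> i j _ _; apply: Pf_inj.
  rewrite -big_split; apply: eq_big => // i _.
  rewrite big_imset_cond /=; last by move=> a b _ _; apply: Pf_inj.
  rewrite -big_split big_mkcond; apply: eq_big => // j _.
  rewrite (inj_eq Pf_inj) -(inj_eq (@ord_inj n)) neq_ltn /g.
  by case: (ltngtP i j) => _; case: (vp Q <= _)%MS.
have E2 : (\sum_(i : 'I_n) \sum_(j : 'I_n) ((j < i)%N && g i j) = \sum_(i : 'I_n) \sum_(j : 'I_n) ((i < j)%N && g i j))%N.
  rewrite exchange_big; apply: eq_bigr => i _; apply: eq_bigr => j _.
  by rewrite /g (span2C (Pf j)).
have E3 : #|PS Q| = (\sum_(i : 'I_n) \sum_(j : 'I_n) ((i < j)%N && g i j))%N.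
  by rewrite card_sumb [RHS]pair_bigA.
by rewrite E1 E2 E3 muln2 addnn.
Qed.

Lemma secPS Q : Q \notin O -> ((q.-1)./2 <= #|PS Q|)%N.
Proof.
move=> QO; have := card_PS Q; have := sec_lower hO oq QO; lia.
Qed.

Lemma cover2 x : (distC C x <= 2)%N.
Proof.
case: (eqVneq (syn x) 0) => [s0 | s0]; first by rewrite cover0.
case: (exists_pt s0) => Q [a a0 sQ].
case: (boolP (Q \in O)) => QO.
  case: (inO QO) => i QE; apply: leq_trans (_ : 1 <= 2)%N => //.
  by apply: (cover1 (i := i) (a := a)); rewrite sQ QE.
have : (0 < #|PS Q|)%N by have := secPS QO; have := q_ge3 oq; lia.
case/card_gt0P => p pP.
apply: leq_trans (hdist_sub (e := ep a Q p) _) (wt2 _ _ _ _).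
by rewrite syn_ep -?sQ //; move: pP; rewrite inE => /andP [].
Qed.

Lemma mcf_bound x : distC C x = 2%N -> ((q.-1)./2 <= nb_at C 2 x)%N.
Proof.
move=> d2.
have s0 : syn x != 0 by apply: contra_eqN d2 => /eqP /cover0 ->.
case: (exists_pt s0) => Q [a a0 sQ].
have QO : Q \notin O.
  apply/negP => QO; case: (inO QO) => i QE.
  by have := cover1 (i := i) (a := a) (_ : syn x = _); rewrite d2 sQ QE => /(_ erefl).
apply: leq_trans (secPS QO) _.
pose h p := x - ep a Q p.
have hinj : {in PS Q &, injective h}.
  by move=> p p' pP p'P /subrI; apply: (ep_inj a0 QO pP p'P).
rewrite -(card_in_imset hinj); apply: subset_leq_card; apply/subsetP => c.
case/imsetP => p pP ->; rewrite inE.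
move: (pP); rewrite inE => /andP [_ sp].
rewrite code_mem /h synB syn_ep // sQ subrr eqxx /=.
by rewrite /hdist opprB addrC subrK wt_ep.
Qed.


Definition E1 := [set e : 'rV[F]_n | (wt e <= 1)%N].

Lemma card_E1 : #|E1| = (1 + n * q.-1)%N.
Proof.
rewrite card_sumb.
have -> : (\sum_(e : 'rV[F]_n) (wt e <= 1)%N =
    \sum_(e : 'rV[F]_n) ((wt e == 0%N) + (wt e == 1%N)))%N.
  by apply: eq_bigr => e _; case: (wt e) => [|[|]].
by rewrite big_split /= -!card_sumb !card_wt bin0 bin1 expn0 expn1 muln1.
Qed.

Lemma card_K : #|codewords C| = (q ^ (n - 3))%N.
Proof. by rewrite card_sub -code_dimE. Qed.

Definition B1 := [set x : 'rV[F]_n | (distC C x <= 1)%N].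

Lemma card_B1 : #|B1| = (#|codewords C| * #|E1|)%N.
Proof.
rewrite -cardsX.
pose f (ce : 'rV[F]_n * 'rV[F]_n) := ce.1 + ce.2.
have finj : {in setX (codewords C) E1 &, injective f}.
  move=> [c e] [c' e']; rewrite !inE /f /= => /andP [cK eE] /andP [c'K e'E] E.
  have cc : c - c' = e' - e.
    by rewrite -[c](addrK e) E addrAC (addrC c') addrK.
  have scc : syn (c - c') = 0.
    have : c \in codewords C by rewrite inE.
    have : c' \in codewords C by rewrite inE.
    by rewrite !code_mem => /eqP sc' /eqP sc; rewrite synB sc sc' subrr.
  have wcc : (wt (c - c') <= 3)%N by rewrite cc; apply: leq_trans (wtB _ _) _; lia.
  have c0 := noLow scc wcc.
  have ceq : c = c' by apply/eqP; rewrite -subr_eq0 c0.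
  by subst c'; congr (_, _); apply: (addrI c).
suff -> : B1 = f @: setX (codewords C) E1 by exact: card_in_imset finj.
apply/setP => x; rewrite inE.
apply/idP/imsetP.
  move=> dx.
  have [c cK hc] : exists2 c, c \in codewords C & (hdist x c <= 1)%N.
    case: (boolP [exists c in codewords C, (hdist x c <= 1)%N]) => [/exists_inP //|/exists_inPn H0].
    have : (2 <= distC C x)%N.
      apply: distC_ge; first by have := n_ge4; lia.
      by move=> c cK; have := H0 c cK; rewrite -ltnNge.
    by move: dx; lia.
  exists (c, x - c); last by rewrite /f /= addrC subrK.
  by rewrite !inE; apply/andP; split => //; move: cK; rewrite inE.
case=> [[c e]]; rewrite !inE /f /= => /andP [cK eE] ->.
apply: leq_trans (distC_le _ (_ : c \in codewords C)) _; first by rewrite inE.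
by rewrite /hdist addrC addKr.
Qed.


Lemma B1_small : (#|B1| < q ^ n)%N.
Proof.
rewrite card_B1 card_K card_E1.
have q3 := q_ge3 oq.
have -> : (q ^ n = q ^ (n - 3) * q ^ 3)%N by rewrite -expnD hn; congr expn; lia.
have qp : (0 < q ^ (n - 3))%N by rewrite expn_gt0; apply/orP; left; lia.
rewrite ltn_pmul2l //.
rewrite hn !expnS expn0.
case: q q3 => // q' q3; rewrite /=; nia.
Qed.

Lemma exists_d2 : exists x, distC C x = 2%N.
Proof.
have : (0 < #|~: B1|)%N.
  have := cardsC B1; rewrite card_mx mul1n => E; have := B1_small; rewrite -E -{1}[#|B1|]addn0 ltn_add2l; exact.
case/card_gt0P => x; rewrite !inE -ltnNge => d; exists x.
by apply/eqP; rewrite eqn_leq cover2 d.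
Qed.

Lemma covradE : covrad C = 2%N.
Proof.
apply/eqP; rewrite eqn_leq; apply/andP; split.
  by apply/bigmax_leqP => x _; apply: cover2.
by have [x dx] := exists_d2; rewrite -dx; apply: leq_bigmax.
Qed.

Lemma d2_of x c : c \in codewords C -> hdist x c = 2%N -> distC C x = 2%N.
Proof.
move=> cK hc; apply/eqP; rewrite eqn_leq cover2 /=.
apply: distC_ge; first by have := n_ge4; lia.
move=> c' c'K; rewrite leqNgt; apply/negP => lt.
have scc : syn (c - c') = 0.
  by move: cK c'K; rewrite !code_mem => /eqP sc /eqP sc'; rewrite synB sc sc' subrr.
have wcc : (wt (c - c') <= 3)%N.
  have -> : c - c' = (x - c') - (x - c) by rewrite opprB [RHS]addrC addrA subrK.
  apply: leq_trans (wtB _ _) _; rewrite (_ : wt (x - c) = 2%N) // addn2.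
  by move: lt; rewrite /hdist.
have := noLow scc wcc => /eqP; rewrite subr_eq0 => /eqP E; subst c'.
by move: lt; rewrite hc.
Qed.

Lemma card_N2 : (#|[set x : 'rV[F]_n | distC C x == 2%N]| + #|B1| = q ^ n)%N.
Proof.
have -> : [set x : 'rV[F]_n | distC C x == 2%N] = ~: B1.
  apply/setP => x; rewrite !inE -ltnNge.
  by have := cover2 x; case: (distC C x) => [|[|[|]]].
by rewrite addnC cardsC card_mx mul1n.
Qed.

Lemma sum_S2 : (\sum_(x | distC C x == 2%N) nb_at C 2 x =
  #|codewords C| * ('C(n, 2) * q.-1 ^ 2))%N.
Proof.
rewrite big_mkcond /=.
have -> : (\sum_x (if distC C x == 2%N then nb_at C 2 x else 0) =
    \sum_x \sum_c ((c \in codewords C) && (hdist x c == 2%N)))%N.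
  apply: eq_bigr => x _; rewrite /nb_at card_sumb.
  case: eqP => // dx; rewrite big1 // => c _.
  case cK: (c \in codewords C) => //=; case: eqP => // hc.
  by have := d2_of cK hc.
rewrite exchange_big /= [RHS]mulnC /codewords card_sumb big_distrr /=.
apply: eq_bigr => c _; rewrite inE; case cK: (c <= C)%MS; last by rewrite muln0 big1.
rewrite muln1 -card_wt card_sumb /=.
rewrite (reindex_inj (addIr c)) /=; apply: eq_bigr => e _.
by rewrite /hdist addrK.
Qed.


Lemma densityE : density C 2 ((q.-1)./2) = (1 + 1 / q%:R)%R.
Proof.
have q3 := q_ge3 oq.
set Z := (q ^ (n - 3))%N.
have eN : #|[set x : 'rV[F]_n | distC C x == 2%N]| = (Z * (q ^ 2 * q.-1))%N.
  have := card_N2; rewrite card_B1 card_K card_E1 -/Z.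
  have e3 : (q ^ n = Z * q ^ 3)%N by rewrite -expnD hn; congr expn; lia.
  have e1 : (1 + n * q.-1 = q ^ 2)%N by rewrite hn; case: q q3 => // q' _ /=; nia.
  have e2 : (q ^ 3 = q ^ 2 * q.-1 + q ^ 2)%N by case: q q3 => // q' _ /=; nia.
  rewrite e3 e1 e2 mulnDr => /eqP; rewrite eqn_add2r => /eqP ->.
  by rewrite mulnA.
rewrite /density sum_S2 card_K -/Z eN.
have eB : ('C(n, 2) * 2 = q.+1 * q)%N by rewrite bin2_mul hn.
have emu : ((q.-1)./2 * 2 = q.-1)%N by move: oq; lia.
have Zp : (0 < Z)%N by rewrite expn_gt0; apply/orP; left; lia.
set B := 'C(n, 2) in eB *; set mu := (q.-1)./2 in emu *; set p := q.-1 in emu *.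
have qE : q = p.+1 by rewrite /p; lia.
have pp : (0 < p)%N by rewrite /p; lia.
have eB' : (B%:R : rat) = (p.+2)%:R * (p.+1)%:R / 2.
  by apply: (canRL (mulfK _)); rewrite ?pnatr_eq0 // -!natrM eB qE.
have emu' : (mu%:R : rat) = p%:R / 2.
  by apply: (canRL (mulfK _)); rewrite ?pnatr_eq0 // -!natrM emu.
rewrite !natrM !natrX eB' emu' qE.
have p0 : (p%:R : rat) != 0 by rewrite pnatr_eq0 -lt0n.
have Z0 : (Z%:R : rat) != 0 by rewrite pnatr_eq0 -lt0n.
rewrite -[p.+2]addn1 -[p.+1]addn1 !natrD.
have p1 : (p%:R + 1 : rat) != 0 by rewrite natr1 pnatr_eq0.
by field; rewrite p0 p1 expf_neq0.
Qed.

End Code2.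

Unset Implicit Arguments.

Theorem proposition5p7 (F : finFieldType) (O : {set point F 2}) :
  odd #|F| -> is_oval O ->
  let q := #|F| in let n := q.+1 in let mu := (q.-1)./2 in
  saturating_1mu O n mu /\
  forall C : 'M[F]_n, corresponds C O ->
    [/\ code_dim C = (n - 3)%N, min_dist C = 4%N, covrad C = 2%N,
        MCF C 2 mu & density C 2 mu = (1 + 1 / q%:R)%R].
Proof.
move=> oq hO q n mu; split.
  split.
  - exact: card_O hO.
  - have [P1 [P2 [P3 [[P1O P2O P3O] [P12 P13 P23]]]]] := three_pts hO oq.
    have sub P : P \in O -> (vp P <= (\sum_(P0 in O) <<val P0>>)%MS)%MS.
      by move=> PO; apply: (sumsmx_sup P) => //; rewrite genmxE.
    by apply: (rank3 hO P1O P2O P3O P12 P13 P23); apply: sub.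
  - apply/negP => /eqP OT; have := card_all_pts F; rewrite -OT (card_O hO).
    have := q_gt1 F; rewrite -/q; nia.
  - by move=> Q QO; apply: sec_lower.
move=> C [H [Pf [Pinj OE colH CE]]].
have [cf cf0 colE] := fin_all_exists2 colH.
have hn : n = q.+1 by [].
split.
- have h := code_dimE hO oq OE cf0 colE CE; exact h.
- have h := min_distE hO oq hn Pinj OE cf0 colE CE; exact h.
- have h := covradE hO oq hn Pinj OE cf0 colE CE; exact h.
- split; first by have h := covradE hO oq hn Pinj OE cf0 colE CE; exact h.
  by move=> x; have h := @mcf_bound _ _ hO oq _ hn _ _ _ _ Pinj OE cf0 colE CE x; exact h.
- have h := densityE hO oq hn Pinj OE cf0 colE CE; exact h.
Qed.
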